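(* Let $n=n_1+n_2$ with integers $n_1,n_2\geq 1$, and let $f\colon \mathbb{F}_{2^{n_1}}\times\mathbb{F}_{2^{n_2}}\to\mathbb{F}_2$ be an $n$-variable Boolean function with bivariate representation $$f(x,y)=\sum_{i=0}^{2^{n_1}-1}\sum_{j=0}^{2^{n_2}-1}f_{i,j}x^iy^j,\qquad f_{i,j}\in\mathbb{F}_{2^{[n_1,n_2]}}.$$ Then $$\deg f=\max_{0\leq i\leq 2^{n_1}-1,\ 0\leq j\leq 2^{n_2}-1}\{\mathrm{wt}_{n_1}(i)+\mathrm{wt}_{n_2}(j)\mid f_{i,j}\neq 0\}.$$
   Context: $[n_1,n_2]$ denotes the least common multiple of $n_1$ and $n_2$, so $\mathbb{F}_{2^{n_1}}$ and $\mathbb{F}_{2^{n_2}}$ are subfields of $\mathbb{F}_{2^{[n_1,n_2]}}$. The additive group $\mathbb{F}_{2^{n_1}}\times\mathbb{F}_{2^{n_2}}$ is an $n$-dimensional $\mathbb{F}_2$-vector space, so Boolean functions on it are $n$-variable Boolean functions. The bivariate representation of $f$ is the unique polynomial $\sum_{i=0}^{2^{n_1}-1}\sum_{j=0}^{2^{n_2}-1}f_{i,j}x^iy^j$ with coefficients in $\mathbb{F}_{2^{[n_1,n_2]}}$ that agrees with $f$ on all $(x,y)\in\mathbb{F}_{2^{n_1}}\times\mathbb{F}_{2^{n_2}}$ (obtained by Lagrange interpolation). The algebraic degree $\deg f$ is the degree of the algebraic normal form of $f$ as a function of the $n$ binary coordinates $x_1,\dots,x_{n_1},y_1,\dots,y_{n_2}$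 obtained by writing $x=\sum x_i\alpha_i$, $y=\sum y_j\beta_j$ for $\mathbb{F}_2$-bases $\{\alpha_i\}$, $\{\beta_j\}$ (independent of the bases chosen). For an integer $0\le i\le 2^k-1$, $\mathrm{wt}_k(i)$ denotes the number of $1$'s in the binary expansion of $i$ (so $\mathrm{wt}_k(2^k-1)=k$). *)

(* Defs.v *)
From HB Require Import structures.
From mathcomp Require Import all_boot all_order all_algebra all_field.
Set Implicit Arguments. Unset Strict Implicit. Unset Printing Implicit Defensive.
Import GRing.Theory.
Local Open Scope ring_scope.

(* The subfield F_{2^k} of a finite field L of characteristic 2 containing it:
   the fixed points of x |-> x^(2^k). *)
Definition subF (L : finFieldType) (k : nat) : pred L :=
  [pred x : L | x ^+ (2 ^ k) == x].

Definition bincomb (L : finFieldType) (k : nat) (a : 'I_k -> L) (S : {set 'I_k}) : L :=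
  \sum_(i in S) a i.

Definition F2basis (L : finFieldType) (k : nat) (a : 'I_k -> L) : Prop :=
  (forall i, a i \in @subF L k) /\
  (forall S : {set 'I_k}, bincomb a S = 0 -> S = set0).

(* Coefficient of the monomial prod_{i in S1} x_i prod_{j in S2} y_j in the
   algebraic normal form of f (Moebius transform), with x = sum x_i alpha_i,
   y = sum y_j beta_j. *)
Definition anf_coef (L : finFieldType) (n1 n2 : nat)
  (alpha : 'I_n1 -> L) (beta : 'I_n2 -> L) (f : L -> L -> bool)
  (S1 : {set 'I_n1}) (S2 : {set 'I_n2}) : bool :=
  odd (\sum_(T1 : {set 'I_n1} | T1 \subset S1)
         \sum_(T2 : {set 'I_n2} | T2 \subset S2)
            f (bincomb alpha T1) (bincomb beta T2)).

(* algebraic degree: max total degree of a monomial with nonzero ANF coefficient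
   (0 for the zero function) *)
Definition alg_deg (L : finFieldType) (n1 n2 : nat)
  (alpha : 'I_n1 -> L) (beta : 'I_n2 -> L) (f : L -> L -> bool) : nat :=
  (\max_(S1 : {set 'I_n1}) \max_(S2 : {set 'I_n2} | anf_coef alpha beta f S1 S2)
      (#|S1| + #|S2|))%N.

Definition wt (k i : nat) : nat := (\sum_(t < k) (i %/ 2 ^ t) %% 2)%N.

(* Main.v *)
Require Import Defs.
From HB Require Import structures.
From mathcomp Require Import all_boot all_order all_algebra all_field.
From mathcomp Require Import zify.
Import GRing.Theory.
Local Open Scope ring_scope.

Section Bits.
Definition Nb (b : nat -> bool) (n : nat) : nat := (\sum_(t < n) b t * 2 ^ t)%N.

Lemma Nb_lt b n : (Nb b n < 2 ^ n)%N.
Proof.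
elim: n b => [|n IH] b; first by rewrite /Nb big_ord0.
rewrite /Nb big_ord_recl /= expn0 muln1.
have -> : (\sum_(i < n) b (bump 0 i) * 2 ^ bump 0 i = 2 * Nb (fun t => b t.+1) n)%N.
  rewrite /Nb big_distrr /=; apply: eq_bigr => i _.
  by rewrite /bump /= add1n expnS mulnCA.
have := IH (fun t => b t.+1); rewrite expnS.
case: (b 0%N) => /=; lia.
Qed.

Lemma Nb_bit b n t : (t < n)%N -> ((Nb b n %/ 2 ^ t) %% 2)%N = b t.
Proof.
elim: n b t => [|n IH] b t //.
rewrite /Nb big_ord_recl /= expn0 muln1.
have -> : (\sum_(i < n) b (bump 0 i) * 2 ^ bump 0 i = 2 * Nb (fun t => b t.+1) n)%N.
  rewrite /Nb big_distrr /=; apply: eq_bigr => i _.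
  by rewrite /bump /= add1n expnS mulnCA.
case: t => [|t] Ht.
  rewrite expn0 divn1 addnC mulnC modnMDl.
  by case: (b 0%N).
rewrite expnS divnMA [in X in (X %/ _)%N]addnC [in X in (X %/ _)%N]mulnC divnMDl // (divn_small (_ : b 0%N < 2)%N) ?addn0; last by case: (b 0%N).
by rewrite IH.
Qed.
End Bits.

Section Num.
Variable n : nat.
Definition num (I : {set 'I_n}) : nat := Nb (fun t => t \in map val (enum I)) n.

Lemma memb (I : {set 'I_n}) (i : 'I_n) : (val i \in map val (enum I)) = (i \in I).
Proof. by rewrite mem_map ?mem_enum //; apply: val_inj. Qed.

Lemma num_sum I : num I = (\sum_(t in I) 2 ^ t)%N.
Proof.
rewrite /num /Nb [in RHS]big_mkcond /=; apply: eq_bigr => i _.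
by rewrite memb; case: (i \in I); rewrite ?mul1n ?mul0n.
Qed.

Lemma num_lt I : (num I < 2 ^ n)%N.
Proof. exact: Nb_lt. Qed.

Lemma num_bit I (i : 'I_n) : ((num I %/ 2 ^ i) %% 2)%N = (i \in I).
Proof. by rewrite /num Nb_bit // memb. Qed.

Lemma num_inj : injective num.
Proof.
move=> I J e; apply/setP => i.
have := num_bit I i; rewrite e num_bit; by case: (i \in I); case: (i \in J).
Qed.

Lemma wt_num I : wt n (num I) = #|I|.
Proof.
rewrite /wt (eq_bigr (fun i : 'I_n => nat_of_bool (i \in I))); last by move=> i _; rewrite num_bit.
by rewrite -sum1_card [in RHS]big_mkcond /=; apply: eq_bigr => i _; case: (i \in I).
Qed.

Definition numo (I : {set 'I_n}) : 'I_(2 ^ n) := Ordinal (num_lt I).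

Lemma card_sets : #|{set 'I_n}| = (2 ^ n)%N.
Proof. by rewrite -cardsT -powersetT card_powerset cardsT card_ord. Qed.

Lemma numo_bij : bijective numo.
Proof.
apply: inj_card_bij; last by rewrite card_sets card_ord.
by move=> I J /(congr1 val) /num_inj.
Qed.
End Num.
Arguments num {n}.
Arguments numo {n}.
Arguments num_inj {n}.

Section Char2.
Variable L : finFieldType.
Hypothesis hchar : 2%N \in [pchar L].

Lemma addxx (x : L) : x + x = 0.
Proof. by rewrite -mulr2n -mulr_natl (pcharf0 hchar) mul0r. Qed.

Lemma natr_odd m : (m%:R : L) = (odd m)%:R.
Proof.
rewrite -{1}(odd_double_half m) natrD -muln2 natrM (pcharf0 hchar) mulr0 addr0.
done.
Qed.

Lemma sqr_sum (I : Type) (r : seq I) (P : pred I) (F : I -> L) :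
  (\sum_(i <- r | P i) F i) ^+ 2 = \sum_(i <- r | P i) F i ^+ 2.
Proof.
rewrite -(pFrobenius_autE hchar) rmorph_sum; exact: eq_bigr.
Qed.

Lemma frob_sum (I : Type) (r : seq I) (P : pred I) (F : I -> L) t :
  (\sum_(i <- r | P i) F i) ^+ (2 ^ t) = \sum_(i <- r | P i) F i ^+ (2 ^ t).
Proof.
elim: t => [|t IH]; first by rewrite expn0 expr1; apply: eq_bigr => i _; rewrite expr1.
rewrite expnSr exprM IH sqr_sum; apply: eq_bigr => i _; by rewrite exprM.
Qed.

Lemma pair0 (T : finType) (A S : {set T}) k : k \in S -> k \notin A ->
  \sum_(X : {set T} | (X \subset S) && (A \subset X)) 1 = 0 :> L.
Proof.
move=> kS kA.
rewrite (@bigID _ _ _ _ (index_enum {set T}) (fun X => k \in X)) /=.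
rewrite (reindex_onto (fun X => k |: X) (fun X => X :\ k)); last first.
  by move=> X /andP [_ kX]; rewrite setD1K.
rewrite (@eq_bigl _ _ _ _ (index_enum {set T}) _ (fun j => (j \subset S) && (A \subset j) && (k \notin j))); first exact: addxx.
move=> j /=.
case kj: (k \in j).
  rewrite andbF; apply/negbTE/negP => /andP [_ /eqP E]; move: kj.
  by rewrite -E !inE eqxx.
rewrite setU1K ?kj // !inE eqxx /= !andbT.
rewrite subUset sub1set kS /= eqxx !andbT; congr andb.
apply/idP/idP => H; last by apply: (subset_trans H); apply: subsetUr.
apply/subsetP => x xA; have := subsetP H x xA; rewrite !inE.
case: eqP => [ex|] //=; by move: kA; rewrite -ex xA.
Qed.
End Char2.
Arguments addxx {L}.
Arguments natr_odd {L}.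
Arguments frob_sum {L}.

Section Key.
Variable L : finFieldType.
Hypothesis hchar : 2%N \in [pchar L].
Variable n : nat.
Variable a : 'I_n -> L.

Lemma prod_ind (I : {set 'I_n}) (f : {ffun 'I_n -> 'I_n}) (T : {set 'I_n}) :
  \prod_(t in I) ((f t \in T)%:R : L) = (f @: I \subset T)%:R.
Proof.
case: (boolP (f @: I \subset T)) => H.
  apply: big1 => t tI; have := subsetP H (f t) (imset_f _ tI); by move=> ->.
have [x /imsetP [t tI ->] ftT] := subsetPn H.
by rewrite (bigD1 t) //= (negbTE ftT) mul0r.
Qed.

Lemma expand (I T : {set 'I_n}) (j0 : 'I_n) :
  bincomb a T ^+ num I =
  \sum_(f in pffun_on j0 (mem I) predT)
     ((f @: I \subset T)%:R * \prod_(t in I) a (f t) ^+ (2 ^ t)).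
Proof.
rewrite num_sum -prodrXr /bincomb.
rewrite (eq_bigr (fun t : 'I_n => \sum_(k : 'I_n) ((k \in T)%:R * a k ^+ (2 ^ t)))); last first.
  move=> t _; rewrite frob_sum // big_mkcond /=; apply: eq_bigr => k _.
  by case: (k \in T); rewrite ?mul1r ?mul0r.
rewrite (big_distr_big j0) /=; apply: eq_bigr => f _.
by rewrite big_split /= prod_ind.
Qed.

Lemma key (I S : {set 'I_n}) : (#|I| < #|S|)%N ->
  \sum_(T : {set 'I_n} | T \subset S) bincomb a T ^+ num I = 0.
Proof.
move=> H.
have [j0 _] : exists j0 : 'I_n, true.
  by case/card_gt0P: (leq_ltn_trans (leq0n _) H) => x _; exists x.
rewrite (@eq_bigr _ _ _ _ (index_enum {set 'I_n}) _ _ _ (fun T _ => expand I T j0)).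
rewrite exchange_big /=; apply: big1 => f _.
rewrite -big_distrl /=.
have [k kS kI] : exists2 k, k \in S & k \notin f @: I.
  apply/subsetPn; apply: contraTN H => sub; rewrite -leqNgt.
  exact: leq_trans (subset_leq_card sub) (leq_imset_card _ _).
suff -> : \sum_(i : {set 'I_n} | i \subset S) ((f @: I \subset i)%:R : L) = 0 by rewrite mul0r.
apply: (eq_trans _ (@pair0 L hchar _ _ _ _ kS kI)); rewrite [in RHS]big_mkcondr /=.
by apply: eq_bigr => X _; case: (f @: I \subset X).
Qed.
End Key.

Section Interp.
Variable L : finFieldType.
Hypothesis hchar : 2%N \in [pchar L].
Variable n : nat.
Variable a : 'I_n -> L.

Lemma bincombE (S : {set 'I_n}) : bincomb a S = \sum_i (i \in S)%:R * a i.
Proof.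
rewrite /bincomb big_mkcond /=; apply: eq_bigr => i _.
by case: (i \in S); rewrite ?mul1r ?mul0r.
Qed.

Lemma bincomb_inj : (forall S : {set 'I_n}, bincomb a S = 0 -> S = set0) ->
  injective (bincomb a).
Proof.
move=> ind S T e.
pose D := [set i | (i \in S) (+) (i \in T)].
have E1 : bincomb a D = bincomb a S + bincomb a T.
  rewrite !bincombE -big_split /=.
  apply: eq_bigr => i _; rewrite inE -mulrDl.
  by case: (i \in S); case: (i \in T); rewrite /= ?addr0 ?add0r ?(addxx hchar).
have : bincomb a D = 0 by rewrite E1 e addxx.
move/ind => D0; apply/setP => i.
have : i \notin D by rewrite D0 inE.
by rewrite inE; case: (i \in S); case: (i \in T).
Qed.

Lemma interp (u : {set 'I_n} -> L) : injective (bincomb a) ->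
  (forall T, \sum_I u I * bincomb a T ^+ num I = 0) -> forall I, u I = 0.
Proof.
move=> inj H I0.
pose p := \sum_(I : {set 'I_n}) u I *: 'X^(num I).
have p0 : p = 0.
  apply: (@roots_geq_poly_eq0 _ _ [seq bincomb a T | T : {set 'I_n}]).
  - apply/allP => x /mapP [T _ ->]; rewrite /root /p horner_sum.
    rewrite (@eq_bigr _ _ _ _ (index_enum {set 'I_n}) _ _ (fun I => u I * bincomb a T ^+ num I)) ?H // => I _.
    by rewrite hornerZ hornerXn.
  - by rewrite map_inj_uniq ?enum_uniq.
  - rewrite size_map -cardE card_sets.
    apply: leq_trans (size_sum _ _ _) _.
    apply/bigmax_leqP => I _.
    apply: leq_trans (size_scale_leq _ _) _.
    by rewrite size_polyXn; apply: num_lt.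
have := congr1 (fun q : {poly L} => q`_(num I0)) p0.
rewrite coef0 /p coef_sum (bigD1 I0) //= coefZ coefXn eqxx mulr1 big1 ?addr0 //.
move=> I nI; rewrite coefZ coefXn.
suff -> : (num I0 == num I) = false by rewrite mulr0.
by apply/negbTE/eqP => /num_inj e; move: nI; rewrite e eqxx.
Qed.
End Interp.

Lemma swap4 (R : Type) (idx : R) (op : Monoid.com_law idx) (A B C D : finType)
  (P : pred A) (Q : pred B) (F : A -> B -> C -> D -> R) :
  \big[op/idx]_(a | P a) \big[op/idx]_(b | Q b) \big[op/idx]_(c : C) \big[op/idx]_(d : D) F a b c d =
  \big[op/idx]_(c : C) \big[op/idx]_(d : D) \big[op/idx]_(a | P a) \big[op/idx]_(b | Q b) F a b c d.
Proof.
transitivity (\big[op/idx]_(a | P a) \big[op/idx]_(c : C) \big[op/idx]_(d : D) \big[op/idx]_(b | Q b) F a b c d).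
  apply: eq_bigr => a _; rewrite exchange_big; apply: eq_bigr => c _; exact: exchange_big.
rewrite exchange_big; apply: eq_bigr => c _; exact: exchange_big.
Qed.

Section Phi.
Variable L : finFieldType.
Hypothesis hchar : 2%N \in [pchar L].
Variables n1 n2 : nat.
Variable alpha : 'I_n1 -> L.
Variable beta : 'I_n2 -> L.
Hypothesis inja : injective (bincomb alpha).
Hypothesis injb : injective (bincomb beta).

Lemma sepsum (A B : finType) (P : pred A) (Q : pred B) (F : A -> L) (G : B -> L) c :
  \sum_(x | P x) \sum_(y | Q y) (c * F x * G y) = c * (\sum_(x | P x) F x) * (\sum_(y | Q y) G y).
Proof.
rewrite -mulrA big_distrl big_distrr /=; apply: eq_bigr => x _.
rewrite big_distrr big_distrr /=; apply: eq_bigr => y _; by rewrite !mulrA.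
Qed.

Definition K := ({set 'I_n1} * {set 'I_n2})%type.
Definition V := {ffun K -> L}.

Definition g (w : V) (T : K) : L :=
  \sum_(I : {set 'I_n1}) \sum_(J : {set 'I_n2})
     w (I, J) * bincomb alpha T.1 ^+ num I * bincomb beta T.2 ^+ num J.

Definition Phi (w : V) : V := [ffun S : K =>
  \sum_(T1 : {set 'I_n1} | T1 \subset S.1) \sum_(T2 : {set 'I_n2} | T2 \subset S.2)
     g w (T1, T2)].

Definition Low (d : nat) : {set V} :=
  [set w : V | [forall k : K, (w k != 0) ==> (#|k.1| + #|k.2| <= d)%N]].

Lemma LowP d (w : V) : reflect (forall k, w k != 0 -> (#|k.1| + #|k.2| <= d)%N) (w \in Low d).
Proof.
rewrite inE; apply: (iffP forallP) => H k; first by move=> /(implyP (H k)).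
by apply/implyP => /H.
Qed.

Lemma Phi_low d (w : V) : w \in Low d -> Phi w \in Low d.
Proof.
move/LowP => H; apply/LowP => S; apply: contraNT; rewrite -ltnNge => HS.
rewrite ffunE /g.
rewrite (@swap4 _ _ _ _ _ _ _ _ _ (fun T1 T2 I J => w (I, J) * bincomb alpha T1 ^+ num I * bincomb beta T2 ^+ num J)).
apply/eqP; apply: big1 => I _; apply: big1 => J _.
case: (eqVneq (w (I, J)) 0) => [w0|wn0].
  by apply: big1 => T1 _; apply: big1 => T2 _; rewrite w0 !mul0r.
have := H _ wn0 => /= hIJ.
have h := leq_ltn_trans hIJ HS.
have [lt1|lt2] : (#|I| < #|S.1|)%N \/ (#|J| < #|S.2|)%N.
  case: (ltnP #|I| #|S.1|) => [lt1|ge1]; [by left | right].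
  by rewrite -(ltn_add2l #|I|); apply: (leq_trans h); rewrite leq_add2r.
  by rewrite sepsum (@key L hchar _ alpha _ _ lt1) ?mulr0 ?mul0r.
by rewrite sepsum (@key L hchar _ beta _ _ lt2) ?mulr0 ?mul0r.
Qed.
Lemma mob (G1 G2 : K -> L) :
  (forall S : K, \sum_(T1 : {set 'I_n1} | T1 \subset S.1) \sum_(T2 : {set 'I_n2} | T2 \subset S.2) G1 (T1, T2)
              = \sum_(T1 : {set 'I_n1} | T1 \subset S.1) \sum_(T2 : {set 'I_n2} | T2 \subset S.2) G2 (T1, T2)) ->
  forall T, G1 T = G2 T.
Proof.
move=> H.
suff: forall m (S : K), (#|S.1| + #|S.2| <= m)%N -> G1 S = G2 S.
  by move=> /(_ _ _ (leqnn _)).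
elim=> [|m IH] S hS.
  { case: S hS => S1 S2 /= hS.
  have e1 : S1 = set0 by apply/eqP; rewrite -cards_eq0; move: hS; rewrite leqn0 addn_eq0 => /andP [].
  have e2 : S2 = set0 by apply/eqP; rewrite -cards_eq0; move: hS; rewrite leqn0 addn_eq0 => /andP [].
  subst S1 S2.
  have := H (set0, set0); rewrite !pair_big /= (big_pred1 (set0, set0)) ?(big_pred1 (set0, set0)) //.
  all: by move=> [T1 T2] /=; rewrite !subset0 xpair_eqE. }
have E := H S; rewrite !pair_big /= in E.
rewrite [LHS](bigD1 S) ?subxx // [RHS](bigD1 S) ?subxx //= in E.
suff E' : \sum_(i : K | (i.1 \subset S.1) && (i.2 \subset S.2) && (i != S)) G1 (i.1, i.2)
  = \sum_(i : K | (i.1 \subset S.1) && (i.2 \subset S.2) && (i != S)) G2 (i.1, i.2).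
  by move: E; rewrite E' => /addIr; case: S {H hS E'}.
apply: eq_bigr => -[T1 T2] /= /andP [/andP [s1 s2] ne].
apply: IH => /=.
have l1 := subset_leq_card s1; have l2 := subset_leq_card s2.
suff : (#|T1| < #|S.1|)%N \/ (#|T2| < #|S.2|)%N.
  case => lt.
    have h : (#|T1| + #|T2| < #|S.1| + #|S.2|)%N by rewrite -addSn; exact: leq_add lt l2.
    by move: (leq_trans h hS); rewrite ltnS.
  have h : (#|T1| + #|T2| < #|S.1| + #|S.2|)%N by rewrite -addnS; exact: leq_add l1 lt.
  by move: (leq_trans h hS); rewrite ltnS.
clear E l1 l2; case: S H hS ne s1 s2 => [S1 S2] H hS ne /= s1 s2.
case: (eqVneq T1 S1) => [e1|n1'].
  right; subst T1; apply: proper_card; rewrite properEneq s2 andbT.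
  by apply: contraNneq ne => ->.
by left; apply: proper_card; rewrite properEneq s1 andbT.
Qed.

Lemma Phi_inj : injective Phi.
Proof.
move=> w1 w2 e.
have eg : forall T, g w1 T = g w2 T.
  apply: mob => S; have := congr1 (fun w : V => w S) e; by rewrite !ffunE.
apply/ffunP => -[I J].
apply/eqP; rewrite -subr_eq0; apply/eqP.
suff HH : forall T : {set 'I_n2}, \sum_(J : {set 'I_n2}) (w1 (I, J) - w2 (I, J)) * bincomb beta T ^+ num J = 0.
  exact: (@interp L _ beta (fun J => w1 (I, J) - w2 (I, J)) injb HH J).
move=> T2.
suff HH : forall T : {set 'I_n1}, \sum_(I : {set 'I_n1}) (\sum_(J : {set 'I_n2}) (w1 (I, J) - w2 (I, J)) * bincomb beta T2 ^+ num J) * bincomb alpha T ^+ num I = 0.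
  exact: (@interp L _ alpha _ inja HH I).
move=> T1.
transitivity (g w1 (T1, T2) - g w2 (T1, T2)); last by rewrite eg subrr.
rewrite /g -sumrB; apply: eq_bigr => I' _; rewrite -sumrB big_distrl /=; apply: eq_bigr => J' _.
by rewrite mulrBl !mulrBl; congr (_ - _); rewrite mulrAC.
Qed.

Lemma Low_back d (w : V) : Phi w \in Low d -> w \in Low d.
Proof.
have sub : Phi @: Low d \subset Low d by apply/subsetP => _ /imsetP [v vL ->]; apply: Phi_low.
have eq : Phi @: Low d = Low d.
  by apply/eqP; rewrite eqEcard sub card_imset ?leqnn //; apply: Phi_inj.
by rewrite -{1}eq mem_imset //; apply: Phi_inj.
Qed.
End Phi.

Lemma subF_bincomb (L : finFieldType) (hchar : 2%N \in [pchar L]) k n (a : 'I_n -> L) :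
  (forall i, a i \in @subF L k) -> forall T, bincomb a T \in @subF L k.
Proof.
move=> ha T; rewrite /subF inE /= /bincomb (frob_sum hchar); apply/eqP.
apply: eq_bigr => i _; apply/eqP; have := ha i; by rewrite /subF inE.
Qed.

Theorem proposition1 (n1 n2 : nat) (L : finFieldType)
  (hn1 : (1 <= n1)%N) (hn2 : (1 <= n2)%N)
  (hchar : 2%N \in [pchar L]) (hcard : #|L| = (2 ^ lcmn n1 n2)%N)
  (alpha : 'I_n1 -> L) (beta : 'I_n2 -> L)
  (halpha : F2basis alpha) (hbeta : F2basis beta)
  (f : L -> L -> bool) (c : nat -> nat -> L)
  (hrep : forall x y : L, x \in @subF L n1 -> y \in @subF L n2 ->
     (f x y)%:R = \sum_(i < 2 ^ n1) \sum_(j < 2 ^ n2) c i j * x ^+ i * y ^+ j) :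
  alg_deg alpha beta f =
  (\max_(i < 2 ^ n1) \max_(j < 2 ^ n2 | c i j != 0%R) (wt n1 i + wt n2 j))%N.
Proof.
have inja := @bincomb_inj L hchar _ _ halpha.2.
have injb := @bincomb_inj L hchar _ _ hbeta.2.
have xs := @subF_bincomb L hchar _ _ alpha halpha.1.
have ys := @subF_bincomb L hchar _ _ beta hbeta.1.
pose c' : V L n1 n2 := [ffun k => c (num k.1) (num k.2)].
have anfE : forall S1 S2, ((anf_coef alpha beta f S1 S2 : nat)%:R : L) = Phi L n1 n2 alpha beta c' (S1, S2).
  move=> S1 S2; rewrite /anf_coef -(natr_odd hchar) ffunE /= natr_sum.
  apply: eq_bigr => T1 _; rewrite natr_sum; apply: eq_bigr => T2 _.
  rewrite hrep ?xs ?ys //.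
  rewrite /g (reindex (@numo n1) (onW_bij _ (numo_bij n1))) /=; apply: eq_bigr => I _.
  rewrite (reindex (@numo n2) (onW_bij _ (numo_bij n2))) /=; apply: eq_bigr => J _.
  by rewrite ffunE.
have E : (\max_(i < 2 ^ n1) \max_(j < 2 ^ n2 | c i j != 0%R) (wt n1 i + wt n2 j))%N
   = (\max_(I : {set 'I_n1}) \max_(J : {set 'I_n2} | c' (I, J) != 0%R) (#|I| + #|J|))%N.
  rewrite (reindex (@numo n1) (onW_bij _ (numo_bij n1))) /=; apply: eq_bigr => I _.
  rewrite (reindex (@numo n2) (onW_bij _ (numo_bij n2))) /=.
  by apply: eq_big => [J|J _]; rewrite ?ffunE //= !wt_num.
apply: (eq_trans _ (esym E)).
set D := (\max_(I : {set 'I_n1}) \max_(J : {set 'I_n2} | c' (I, J) != 0%R) (#|I| + #|J|))%N.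
apply/eqP; rewrite eqn_leq; apply/andP; split.
  have cL : c' \in Low L n1 n2 D.
    apply/LowP => -[I J] /= nz.
    apply: leq_trans (leq_bigmax I).
    by apply: leq_bigmax_cond.
  have := @Phi_low L hchar _ _ alpha beta _ _ cL => /LowP PL.
  apply/bigmax_leqP => S1 _; apply/bigmax_leqP => S2 hanf.
  apply: (PL (S1, S2)); rewrite -anfE hanf oner_neq0 //.
have PL : Phi L n1 n2 alpha beta c' \in Low L n1 n2 (alg_deg alpha beta f).
  apply/LowP => -[S1 S2] /= nz.
  have hanf : anf_coef alpha beta f S1 S2.
    by apply: contraNT nz => /negbTE h; rewrite -anfE h.
  apply: leq_trans (leq_bigmax S1).
  by apply: leq_bigmax_cond.
have /LowP cL := @Low_back L hchar _ _ _ _ inja injb _ _ PL.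
apply/bigmax_leqP => I _; apply/bigmax_leqP => J nz.
exact: (cL (I, J) nz).
Qed.
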